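(* Let $H_1$ and $H_2$ be vertex-disjoint connected graphs, each with at least two vertices, and let $l\geqslant 2$. Let $G_1$ be the graph obtained from $H_1$, $H_2$ and a path $v_1v_2\ldots v_l$ by identifying $v_1$ with a vertex of $H_1$ and $v_l$ with a vertex of $H_2$ (the internal vertices $v_2,\ldots,v_{l-1}$ being new). Let $$G_2=G_1-\{v_lx: x\in N_{H_2}(v_l)\}+\{v_1x: x\in N_{H_2}(v_l)\}.$$ Then $\xi^{ee}(G_1)<\xi^{ee}(G_2)$.
   Context: All graphs are finite, simple and connected. For a vertex $x$ of a connected graph $G$, $\varepsilon_G(x)$ is the eccentricity of $x$ and $d_G(x)$ its degree; $N_H(v)$ is the neighbourhood of $v$ in $H$. The total reciprocal edge-eccentricity of $G$ is $\xi^{ee}(G)=\sum_{uv\in E(G)}\left(\frac{1}{\varepsilon_G(u)}+\frac{1}{\varepsilon_G(v)}\right)=\sum_{x\in V(G)}\frac{d_G(x)}{\varepsilon_G(x)}$. *)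

(* Defs.v *)
From mathcomp Require Import all_boot all_order all_algebra.
Set Implicit Arguments. Unset Strict Implicit. Unset Printing Implicit Defensive.
Import Order.TTheory GRing.Theory Num.Theory.

Section GraphParams.
Variable V : finType.
Variable adj : rel V.

Fixpoint reach (n : nat) (x y : V) : bool :=
  match n with
  | 0 => x == y
  | n'.+1 => reach n' x y || [exists z, reach n' x z && adj z y]
  end.

(* graph distance: least n with reach n x y (in a connected graph it is < #|V|) *)
Definition gdist (x y : V) : nat := find (fun n => reach n x y) (iota 0 #|V|).

Definition ecc (x : V) : nat := \max_(y : V) gdist x y.

Definition deg (x : V) : nat := #|[set y | adj x y]|.

Definition xi_ee : rat :=
  \sum_(x : V) ((deg x)%:R / (ecc x)%:R)%R.
End GraphParams.

Definition simple_graph (T : finType) (e : rel T) : Prop :=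
  symmetric e /\ irreflexive e.

Definition connected_graph (T : finType) (e : rel T) : Prop :=
  forall x y, connect e x y.

(* vertices: H1's vertices, H2's vertices, and the l-2 internal path vertices
   v_2, ..., v_{l-1}  (inr i is v_{i+2}) *)
Definition Vtx (T1 T2 : finType) (l : nat) := ((T1 + T2) + 'I_(l - 2))%type.

Section Construction.
Variables (T1 T2 : finType) (e1 : rel T1) (e2 : rel T2) (a : T1) (b : T2) (l : nat).

Definition ppos (v : Vtx T1 T2 l) : option nat :=
  match v with
  | inl (inl x) => if x == a then Some 1 else None
  | inl (inr y) => if y == b then Some l else None
  | inr i => Some (nat_of_ord i).+2
  end.

Definition path_edge (u v : Vtx T1 T2 l) : bool :=
  match ppos u, ppos v with
  | Some i, Some j => (i.+1 == j) || (j.+1 == i)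
  | _, _ => false
  end.

Definition H_edge (u v : Vtx T1 T2 l) : bool :=
  match u, v with
  | inl (inl x), inl (inl y) => e1 x y
  | inl (inr x), inl (inr y) => e2 x y
  | _, _ => false
  end.

Definition G1 : rel (Vtx T1 T2 l) := fun u v => H_edge u v || path_edge u v.

Definition removed_edge (u v : Vtx T1 T2 l) : bool :=
  match u, v with
  | inl (inr x), inl (inr y) => ((x == b) && e2 b y) || ((y == b) && e2 b x)
  | _, _ => false
  end.

Definition added_edge (u v : Vtx T1 T2 l) : bool :=
  match u, v with
  | inl (inl x), inl (inr y) => (x == a) && e2 b y
  | inl (inr y), inl (inl x) => (x == a) && e2 b y
  | _, _ => false
  end.

Definition G2 : rel (Vtx T1 T2 l) :=
  fun u v => (G1 u v && ~~ removed_edge u v) || added_edge u v.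
End Construction.

Arguments G1 {T1 T2} e1 e2 a b l _ _.
Arguments G2 {T1 T2} e1 e2 a b l _ _.

(* Main.v *)
Require Import Defs.
From mathcomp Require Import all_boot all_order all_algebra.
From mathcomp Require Import zify ring lra.
Import Order.TTheory GRing.Theory Num.Theory.
Set Implicit Arguments. Unset Strict Implicit. Unset Printing Implicit Defensive.

Section Gen.
Variable V : finType.
Variable e : rel V.

Lemma reachS n x y : reach e n x y -> reach e n.+1 x y.
Proof. by move=> h /=; rewrite h. Qed.

Lemma reach_mono n m x y : n <= m -> reach e n x y -> reach e m x y.
Proof.
move/subnK => <-; elim: (m - n) => // k IH h.
by rewrite addSn; apply: reachS; apply: IH.
Qed.

Lemma reach0 x : reach e 0 x x.
Proof. by rewrite /= eqxx. Qed.

Lemma reach1 x y : e x y -> reach e 1 x y.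
Proof. by move=> h /=; apply/orP; right; apply/existsP; exists x; rewrite eqxx. Qed.

Lemma reach_cat n m x y z : reach e n x y -> reach e m y z -> reach e (n + m) x z.
Proof.
elim: m z => [|m IH] z /=; first by rewrite addn0 => h /eqP <-.
rewrite addnS => h /orP [h'|/existsP [w /andP [h1 h2]]].
  by apply: reachS; apply: IH.
by apply/orP; right; apply/existsP; exists w; apply/andP; split; [apply: IH h h1|].
Qed.

Lemma reach_lip (f : V -> nat) : (forall u v, e u v -> f v <= f u + 1) ->
  forall n x y, reach e n x y -> f y <= f x + n.
Proof.
move=> hf; elim=> [|n IH] x y /=; first by move/eqP => ->; rewrite addn0.
case/orP => [h|/existsP [w /andP [h1 h2]]].
  by have := IH _ _ h; lia.
by have := IH _ _ h1; have := hf _ _ h2; lia.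
Qed.

Lemma gdist_le n x y : reach e n x y -> gdist e x y <= n.
Proof.
move=> h; rewrite /gdist; case: (ltnP n #|V|) => hn.
  rewrite leqNgt; apply/negP => H.
  by have := before_find 0 H; rewrite nth_iota // add0n h.
by apply: leq_trans (find_size _ _) _; rewrite size_iota.
Qed.

Lemma path_reach x p : path e x p -> reach e (size p) x (last x p).
Proof.
elim: p x => [|z p IH] x /=; first by rewrite eqxx.
case/andP => exz pz.
by have := reach_cat (reach1 exz) (IH z pz); rewrite add1n.
Qed.

Lemma connect_reach x y : connect e x y -> reach e (gdist e x y) x y.
Proof.
case/connectP => p pth ->.
case/shortenP: pth => p' pth' uq _.
have hr := path_reach pth'.
have sz : size p' < #|V|.
  by have := max_card (mem (x :: p')); rewrite (card_uniqP uq).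
have hh : has (fun n => reach e n x (last x p')) (iota 0 #|V|).
  by apply/hasP; exists (size p'); rewrite // mem_iota.
have hf : find (fun n => reach e n x (last x p')) (iota 0 #|V|) < #|V|.
  by move: hh; rewrite has_find size_iota.
by have := nth_find 0 hh; rewrite /gdist nth_iota.
Qed.

Lemma gdist_lip (f : V -> nat) x y : (forall u v, e u v -> f v <= f u + 1) ->
  connect e x y -> f y <= f x + gdist e x y.
Proof. by move=> hf c; apply: reach_lip (connect_reach c). Qed.

Lemma gdist0 x : gdist e x x = 0.
Proof. by apply/eqP; rewrite -leqn0; apply: gdist_le; apply: reach0. Qed.

Lemma gdist_pos x y : x != y -> 0 < gdist e x y.
Proof.
move=> xy; rewrite /gdist.
have : 0 < #|V| by apply/card_gt0P; exists x.
by case: #|V| => // n _ /=; rewrite (negbTE xy).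
Qed.

Lemma gdist_ecc x y : gdist e x y <= ecc e x.
Proof. by rewrite /ecc; apply: (@leq_bigmax V (fun y => gdist e x y) y). Qed.

Lemma ecc_le x m : (forall y, gdist e x y <= m) -> ecc e x <= m.
Proof. by move=> h; apply/bigmax_leqP => y _. Qed.

Lemma ecc_le_reach x m : (forall y, exists2 n, n <= m & reach e n x y) -> ecc e x <= m.
Proof.
move=> h; apply: ecc_le => y; have [n nm r] := h y.
exact: leq_trans (gdist_le r) nm.
Qed.

Lemma gdist_tri1 w u v : connect e w u -> e u v -> gdist e w v <= gdist e w u + 1.
Proof. by move=> c euv; apply: gdist_le; apply: reach_cat (connect_reach c) (reach1 euv). Qed.

Lemma ecc_pos x y : x != y -> 0 < ecc e x.
Proof. by move=> xy; apply: leq_trans (gdist_pos xy) (gdist_ecc x y). Qed.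

End Gen.

Lemma reach_hom (V W : finType) (e : rel V) (f : V -> W) (e' : rel W) :
  (forall u v, e u v -> e' (f u) (f v)) ->
  forall n x y, reach e n x y -> reach e' n (f x) (f y).
Proof.
move=> hf; elim=> [|n IH] x y /=; first by move/eqP => ->.
case/orP => [h|/existsP [w /andP [h1 h2]]]; first by rewrite IH.
by apply/orP; right; apply/existsP; exists (f w); rewrite IH // hf.
Qed.

Lemma reach_connect (V : finType) (e : rel V) n x y : reach e n x y -> connect e x y.
Proof.
elim: n y => [|n IH] y /=; first by move/eqP => ->.
case/orP => [h|/existsP [w /andP [h1 h2]]]; first exact: IH.
by apply: connect_trans (IH _ h1) (connect1 h2).
Qed.

Lemma max_add (T : finType) (t0 : T) (f : T -> nat) c B :
  (forall z, c + f z <= B) -> c + (\max_z f z)%N <= B.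
Proof.
move=> h; have h0 := h t0.
have : (\max_z f z <= B - c)%N by apply/bigmax_leqP => z _; have := h z; lia.
lia.
Qed.

Section RatS.
Local Open Scope ring_scope.

Lemma frac_le (d e e' : nat) : (0 < e)%N -> (e <= e')%N -> d%:R / e'%:R <= d%:R / e%:R :> rat.
Proof.
move=> he hee; apply: ler_wpM2l; first exact: ler0n.
rewrite lef_pV2 ?posrE ?ltr0n ?ler_nat //; lia.
Qed.

Lemma frac_lt (d e e' : nat) : (0 < d)%N -> (0 < e)%N -> (e < e')%N -> d%:R / e'%:R < d%:R / e%:R :> rat.
Proof.
move=> hd he hee; rewrite ltr_pM2l ?ltr0n //.
rewrite ltf_pV2 ?posrE ?ltr0n ?ltr_nat //; lia.
Qed.

Lemma endX (dA1 dB2 k A1 A2 B1 B2 : nat) : (0 < k)%N -> (0 < A2)%N -> (A2 <= A1)%N ->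
  (0 < B2)%N -> (B2 <= B1)%N -> (A2 < B1)%N ->
  dA1%:R / A1%:R + (dB2 + k)%:R / B1%:R < (dA1 + k)%:R / A2%:R + dB2%:R / B2%:R :> rat.
Proof.
move=> k0 a0 a21 b0 b21 ab.
have h1 := frac_le dA1 a0 a21.
have h2 := frac_lt k0 a0 ab.
have h3 := frac_le dB2 b0 b21.
rewrite !natrD !mulrDl; lra.
Qed.

Lemma endY (dA1 dB2 k A1 A2 B1 B2 : nat) : (dB2 < dA1)%N -> (0 < A2)%N -> (A2 <= B1)%N ->
  (0 < B2)%N -> (B2 <= A1)%N -> (A2 < A1)%N ->
  dA1%:R / A1%:R + (dB2 + k)%:R / B1%:R < (dA1 + k)%:R / A2%:R + dB2%:R / B2%:R :> rat.
Proof.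
move=> d a0 ab b0 ba aa.
have -> : dA1 = ((dA1 - dB2) + dB2)%N by lia.
have p0 : (0 < dA1 - dB2)%N by lia.
have h1 := frac_lt p0 a0 aa.
have h2 := frac_le dB2 b0 ba.
have h3 := frac_le (dB2 + k) a0 ab.
rewrite !natrD !mulrDl in h3 *; lra.
Qed.

Lemma sum_cmp (V : finType) (f1 f2 : V -> rat) (rho : V -> V) (A B : V) :
  injective rho -> rho A = A -> rho B = B -> A != B ->
  (forall v, v != A -> v != B -> f1 (rho v) <= f2 v) ->
  f1 A + f1 B < f2 A + f2 B -> \sum_v f1 v < \sum_v f2 v.
Proof.
move=> ri rA rB AB hv hAB.
have split2 (g : V -> rat) : \sum_v g v = g A + (g B + \sum_(i | (i != A) && (i != B)) g i).
  rewrite (bigD1 A) //=; congr (_ + _).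
  by rewrite (bigD1 B) //= eq_sym.
rewrite [X in X < _](reindex_inj ri) /= !split2 rA rB.
have : \sum_(i | (i != A) && (i != B)) f1 (rho i) <= \sum_(i | (i != A) && (i != B)) f2 i.
  by apply: ler_sum => i /andP [h1 h2]; apply: hv.
lra.
Qed.

End RatS.


Section Main.
Variables (T1 T2 : finType) (e1 : rel T1) (e2 : rel T2) (a : T1) (b : T2) (l : nat).
Hypotheses (sym1 : symmetric e1) (irr1 : irreflexive e1) (con1 : connected_graph e1)
  (c1 : 2 <= #|T1|) (sym2 : symmetric e2) (irr2 : irreflexive e2)
  (con2 : connected_graph e2) (c2 : 2 <= #|T2|) (hl : 2 <= l).

Notation VV := (Vtx T1 T2 l).
Notation g1 := (G1 e1 e2 a b l).
Notation g2 := (G2 e1 e2 a b l).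
Notation pp := (ppos a b (l:=l)).
Definition X (z : T1) : VV := inl (inl z).
Definition Y (y : T2) : VV := inl (inr y).
Definition pv (j : nat) : VV :=
  if j <= 1 then X a else if insub (j - 2) is Some i then inr i else Y b.

Lemma pv_ppos j : 1 <= j <= l -> pp (pv j) = Some j.
Proof.
case/andP => j1 jl; rewrite /pv; case: ifP => j1'.
  have -> : j = 1 by lia.
  by rewrite /= eqxx.
case: insubP => [i _ vi|].
  by rewrite /= vi; congr Some; lia.
move=> h; have -> : j = l by lia.
by rewrite /= eqxx.
Qed.

Lemma pv1 : pv 1 = X a. Proof. by []. Qed.
Lemma pvl : pv l = Y b.
Proof. rewrite /pv; case: ifP => h; first lia. by rewrite insubN //; lia. Qed.

Lemma ppos_le v j : pp v = Some j -> 1 <= j <= l.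
Proof.
case: v => [[z|y]|i] /=.
- by case: ifP => // _ [<-]; lia.
- by case: ifP => // _ [<-]; lia.
- by move=> [<-]; have := ltn_ord i; lia.
Qed.

Lemma ppos_inj v j : pp v = Some j -> v = pv j.
Proof.
case: v => [[z|y]|i] /=.
- by case: ifP => // /eqP -> [<-].
- by case: ifP => // /eqP -> [<-]; rewrite pvl.
- move=> [<-]; rewrite /pv /=; case: insubP => [i' _ vi|]; last first.
    by move=> h; exfalso; move: h; have := ltn_ord i; lia.
  by congr inr; apply: val_inj => /=; rewrite vi; lia.
Qed.

Lemma inr_pv (i : 'I_(l-2)) : (inr i : VV) = pv i.+2.
Proof. by apply: ppos_inj. Qed.

Lemma eq_pv w k : 1 <= k <= l -> (w == pv k) = (pp w == Some k).
Proof.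
move=> hk; apply/eqP/eqP => [->|]; first exact: pv_ppos.
exact: ppos_inj.
Qed.

Lemma vtx_cases (w : VV) :
  [\/ exists z, w = X z, exists2 y, y != b & w = Y y | exists2 k, 1 <= k <= l & w = pv k].
Proof.
case: w => [[z|y]|i].
- by apply: Or31; exists z.
- case: (eqVneq y b) => [->|yb]; last by apply: Or32; exists y.
  by apply: Or33; exists l; [lia | rewrite pvl].
- apply: Or33; exists i.+2; last exact: inr_pv.
  by have := ltn_ord i; lia.
Qed.


Lemma pv_notY j y : j < l -> pv j != Y y.
Proof.
move=> jl; rewrite /pv; case: ifP => // j1; case: insubP => // h; lia.
Qed.

Lemma removed_pvl j w : j < l -> removed_edge e2 b (pv j) w = false.
Proof.
move=> jl; rewrite /pv; case: ifP => j1; first by case: w => [[?|?]|?].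
case: insubP => [i _ _|h]; first by case: w => [[?|?]|?].
lia.
Qed.

Lemma removed_pvr j w : j < l -> removed_edge e2 b w (pv j) = false.
Proof.
move=> jl; rewrite /pv; case: ifP => j1; first by case: w => [[?|?]|?].
case: insubP => [i _ _|h]; first by case: w => [[?|?]|?].
lia.
Qed.

Lemma g1_step j : 1 <= j -> j < l -> g1 (pv j) (pv j.+1) && g1 (pv j.+1) (pv j).
Proof.
move=> j1 jl; rewrite /G1 /path_edge !pv_ppos ?eqxx ?orbT //; lia.
Qed.

Lemma g2_step j : 1 <= j -> j < l -> g2 (pv j) (pv j.+1) && g2 (pv j.+1) (pv j).
Proof.
move=> j1 jl; have /andP [h1 h2] := g1_step j1 jl.
by rewrite /G2 h1 h2 removed_pvl // removed_pvr.
Qed.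

Lemma pwalk (R : rel VV) : (forall j, 1 <= j -> j < l -> R (pv j) (pv j.+1) && R (pv j.+1) (pv j)) ->
  forall i j, 1 <= i -> i <= j -> j <= l ->
  reach R (j - i) (pv i) (pv j) /\ reach R (j - i) (pv j) (pv i).
Proof.
move=> hR i; elim=> [|j IH] i1 ij jl; first lia.
case: (eqVneq i j.+1) => [->|ne]; first by rewrite subnn !reach0.
have ij' : i <= j by lia.
have [r1 r2] := IH i1 ij' (ltnW jl).
have /andP [s1 s2] := hR j (leq_trans i1 ij') jl.
have -> : j.+1 - i = (j - i) + 1 by lia.
split; first exact: reach_cat r1 (reach1 s1).
by rewrite addnC; apply: reach_cat (reach1 s2) r2.
Qed.

Lemma g1_hX u v : e1 u v -> g1 (X u) (X v).
Proof. by rewrite /G1 /= => ->. Qed.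

Lemma g2_hX u v : e1 u v -> g2 (X u) (X v).
Proof. by rewrite /G2 /G1 /= => ->. Qed.

Lemma g1_hY u v : e2 u v -> g1 (Y u) (Y v).
Proof. by rewrite /G1 /= => ->. Qed.

Definition psi (y : T2) : VV := if y == b then X a else Y y.

Lemma g2_hpsi u v : e2 u v -> g2 (psi u) (psi v).
Proof.
move=> euv; rewrite /psi.
case: (eqVneq u b) => [ub|ub]; case: (eqVneq v b) => [vb|vb].
- by subst; rewrite irr2 in euv.
- by rewrite /G2 /= eqxx -ub euv /= orbT.
- by rewrite /G2 /= eqxx sym2 -vb euv /= orbT.
- by rewrite /G2 /G1 /= euv (negbTE ub) (negbTE vb).
Qed.

Lemma cd1 x y : reach e1 (gdist e1 x y) x y.
Proof. exact: connect_reach (con1 x y). Qed.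
Lemma cd2 x y : reach e2 (gdist e2 x y) x y.
Proof. exact: connect_reach (con2 x y). Qed.

Lemma pw1 i j : 1 <= i -> i <= j -> j <= l ->
  reach g1 (j - i) (pv i) (pv j) /\ reach g1 (j - i) (pv j) (pv i).
Proof. by apply: pwalk => k; apply: g1_step. Qed.
Lemma pw2 i j : 1 <= i -> i <= j -> j <= l ->
  reach g2 (j - i) (pv i) (pv j) /\ reach g2 (j - i) (pv j) (pv i).
Proof. by apply: pwalk => k; apply: g2_step. Qed.

Lemma conA w : connect g1 (X a) w /\ connect g1 w (X a).
Proof.
have [[z ->]|[y _ ->]|[k hk ->]] := vtx_cases w.
- split; apply: reach_connect; apply: (reach_hom g1_hX); apply: cd1.
- have [p1 p2] := pw1 (i:=1) (j:=l) (leqnn 1) (ltnW hl) (leqnn l).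
  rewrite pv1 pvl in p1 p2.
  split.
    apply: connect_trans (reach_connect p1) _.
    by apply: reach_connect; apply: (reach_hom g1_hY); apply: cd2.
  apply: connect_trans (reach_connect p2).
  by apply: reach_connect; apply: (reach_hom g1_hY); apply: cd2.
- have [p1 p2] := pw1 (i:=1) (j:=k) (leqnn 1) (proj1 (andP hk)) (proj2 (andP hk)).
  by rewrite pv1 in p1 p2; split; apply: reach_connect; [exact: p1|exact: p2].
Qed.

Lemma con_g1 u v : connect g1 u v.
Proof. exact: connect_trans (proj2 (conA u)) (proj1 (conA v)). Qed.

Definition Pot (f1 : T1 -> nat) (p : nat -> nat) (f2 : T2 -> nat) (v : VV) : nat :=
  match v with inl (inl z) => f1 z | inl (inr y) => f2 y | inr i => p i.+2 end.

Section PotS.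
Variables (f1 : T1 -> nat) (p : nat -> nat) (f2 : T2 -> nat).
Hypotheses (ha : f1 a = p 1) (hb : f2 b = p l)
  (l1 : forall u v, e1 u v -> f1 v <= f1 u + 1)
  (l2 : forall u v, e2 u v -> f2 v <= f2 u + 1)
  (lp : forall j, 1 <= j -> j < l -> p j.+1 <= p j + 1 /\ p j <= p j.+1 + 1).

Lemma pot_ppos v j : pp v = Some j -> Pot f1 p f2 v = p j.
Proof.
case: v => [[z|y]|i] /=.
- by case: ifP => // /eqP -> [<-].
- by case: ifP => // /eqP -> [<-].
- by move=> [<-].
Qed.

Lemma pot_lip u v : g1 u v -> Pot f1 p f2 v <= Pot f1 p f2 u + 1.
Proof.
rewrite /G1 => /orP [].
  by case: u => [[u|u]|u]; case: v => [[v|v]|v] //=; [exact: l1 | exact: l2].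
rewrite /path_edge.
case hu: (pp u) => [i|] //; case hv: (pp v) => [j|] //.
have := ppos_le hu; have := ppos_le hv.
rewrite (pot_ppos hu) (pot_ppos hv) => hj hi /orP [] /eqP e.
  by subst j; have [] := lp (proj1 (andP hi)) (_ : i < l); lia.
by subst i; have [] := lp (proj1 (andP hj)) (_ : j < l); lia.
Qed.

Lemma pot_ecc u v : Pot f1 p f2 v <= Pot f1 p f2 u + ecc g1 u.
Proof.
apply: leq_trans (gdist_lip pot_lip (con_g1 u v)) _.
by rewrite leq_add2l gdist_ecc.
Qed.
End PotS.

Notation E1 := (ecc g1).
Notation E2 := (ecc g2).
Notation eA := (ecc e1 a).
Notation eB := (ecc e2 b).

Lemma lip1 w u v : e1 u v -> gdist e1 w v <= gdist e1 w u + 1.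
Proof. exact: gdist_tri1 (con1 w u). Qed.
Lemma lip2 w u v : e2 u v -> gdist e2 w v <= gdist e2 w u + 1.
Proof. exact: gdist_tri1 (con2 w u). Qed.

Lemma lbX x :
  (forall z, gdist e1 x z <= E1 (X x)) /\
  (forall y, gdist e1 x a + (l - 1) + gdist e2 b y <= E1 (X x)).
Proof.
pose p j := gdist e1 x a + (j - 1).
pose f2 y := gdist e1 x a + (l - 1) + gdist e2 b y.
have ha : gdist e1 x a = p 1 by rewrite /p subnn addn0.
have hb : f2 b = p l by rewrite /f2 /p gdist0 addn0.
have lp : forall j, 1 <= j -> j < l -> p j.+1 <= p j + 1 /\ p j <= p j.+1 + 1.
  by move=> j *; rewrite /p; lia.
have l2 : forall u v, e2 u v -> f2 v <= f2 u + 1.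
  by move=> u v /(lip2 b); rewrite /f2; lia.
have := @pot_ecc (gdist e1 x) p f2 ha hb (@lip1 x) l2 lp (X x).
rewrite /= gdist0 add0n => h; split.
  by move=> z; apply: (h (X z)).
by move=> y; apply: (h (Y y)).
Qed.

Lemma lbY y :
  (forall z, gdist e2 y z <= E1 (Y y)) /\
  (forall z, gdist e2 y b + (l - 1) + gdist e1 a z <= E1 (Y y)).
Proof.
pose p j := gdist e2 y b + (l - j).
pose f1 z := gdist e2 y b + (l - 1) + gdist e1 a z.
have ha : f1 a = p 1 by rewrite /f1 /p gdist0 addn0.
have hb : gdist e2 y b = p l by rewrite /p subnn addn0.
have lp : forall j, 1 <= j -> j < l -> p j.+1 <= p j + 1 /\ p j <= p j.+1 + 1.
  by move=> j *; rewrite /p; lia.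
have l1 : forall u v, e1 u v -> f1 v <= f1 u + 1.
  by move=> u v /(lip1 a); rewrite /f1; lia.
have := @pot_ecc f1 p (gdist e2 y) ha hb l1 (@lip2 y) lp (Y y).
rewrite /= gdist0 add0n => h; split.
  by move=> z; apply: (h (Y z)).
by move=> z; apply: (h (X z)).
Qed.

Lemma lbP j : 1 <= j <= l -> (j - 1) + eA <= E1 (pv j) /\ (l - j) + eB <= E1 (pv j).
Proof.
move=> hj; split.
- pose p k := l - k.
  pose f1 z := (l - 1) + gdist e1 a z.
  pose f2 (y : T2) := 0.
  have ha : f1 a = p 1 by rewrite /f1 /p gdist0 addn0.
  have hb : f2 b = p l by rewrite /f2 /p subnn.
  have lp : forall j, 1 <= j -> j < l -> p j.+1 <= p j + 1 /\ p j <= p j.+1 + 1.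
    by move=> k *; rewrite /p; lia.
  have l1 : forall u v, e1 u v -> f1 v <= f1 u + 1.
    by move=> u v /(lip1 a); rewrite /f1; lia.
  have l2 : forall u v, e2 u v -> f2 v <= f2 u + 1 by [].
  have h := @pot_ecc f1 p f2 ha hb l1 l2 lp (pv j).
  rewrite (pot_ppos ha hb (pv_ppos hj)) in h.
  apply: (max_add a) => z; have := h (X z); rewrite /= /f1 /p; lia.
- pose p k := k - 1.
  pose f2 z := (l - 1) + gdist e2 b z.
  pose f1 (z : T1) := 0.
  have ha : f1 a = p 1 by rewrite /f1 /p subnn.
  have hb : f2 b = p l by rewrite /f2 /p gdist0 addn0.
  have lp : forall j, 1 <= j -> j < l -> p j.+1 <= p j + 1 /\ p j <= p j.+1 + 1.
    by move=> k *; rewrite /p; lia.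
  have l2 : forall u v, e2 u v -> f2 v <= f2 u + 1.
    by move=> u v /(lip2 b); rewrite /f2; lia.
  have l1 : forall u v, e1 u v -> f1 v <= f1 u + 1 by [].
  have h := @pot_ecc f1 p f2 ha hb l1 l2 lp (pv j).
  rewrite (pot_ppos ha hb (pv_ppos hj)) in h.
  apply: (max_add b) => z; have := h (Y z); rewrite /= /f2 /p; lia.
Qed.

Lemma rX2 n u v : reach e1 n u v -> reach g2 n (X u) (X v).
Proof. exact: (@reach_hom _ _ e1 X g2 g2_hX). Qed.
Lemma rpsi n u v : reach e2 n u v -> reach g2 n (psi u) (psi v).
Proof. exact: (@reach_hom _ _ e2 psi g2 g2_hpsi). Qed.
Lemma psib : psi b = X a. Proof. by rewrite /psi eqxx. Qed.
Lemma psiy y : y != b -> psi y = Y y. Proof. by move=> yb; rewrite /psi (negbTE yb). Qed.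

Lemma wA j : 1 <= j <= l -> reach g2 (j - 1) (X a) (pv j) /\ reach g2 (j - 1) (pv j) (X a).
Proof. by case/andP => j1 jl; have := pw2 (leqnn 1) j1 jl; rewrite pv1. Qed.

Lemma ubX x : E2 (X x) <= E1 (X x).
Proof.
have [h1 h2] := lbX x.
apply: ecc_le_reach => w.
have [[z ->]|[y yb ->]|[k hk ->]] := vtx_cases w.
- by exists (gdist e1 x z); [apply: h1 | apply: rX2; apply: cd1].
- exists (gdist e1 x a + gdist e2 b y); first by have := h2 y; lia.
  apply: reach_cat (rX2 (cd1 x a)) _.
  by rewrite -psib -(psiy yb); apply: rpsi; apply: cd2.
- exists (gdist e1 x a + (k - 1)); first by have := h2 b; rewrite gdist0; lia.
  exact: reach_cat (rX2 (cd1 x a)) (proj1 (wA hk)).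
Qed.

Lemma ubY y : y != b -> E2 (Y y) <= E1 (Y y).
Proof.
move=> yb; have [h1 h2] := lbY y.
apply: ecc_le_reach => w.
have [[z ->]|[z zb ->]|[k hk ->]] := vtx_cases w.
- exists (gdist e2 y b + gdist e1 a z); first by have := h2 z; lia.
  apply: reach_cat _ (rX2 (cd1 a z)).
  by rewrite -psib -(psiy yb); apply: rpsi; apply: cd2.
- exists (gdist e2 y z); first exact: h1.
  by rewrite -(psiy yb) -(psiy zb); apply: rpsi; apply: cd2.
- exists (gdist e2 y b + (k - 1)); first by have := h2 a; rewrite gdist0; lia.
  apply: reach_cat _ (proj1 (wA hk)).
  by rewrite -psib -(psiy yb); apply: rpsi; apply: cd2.
Qed.

Lemma ubP j : 1 <= j <= l -> E2 (pv j) <= maxn ((j - 1) + maxn eA eB) (l - j).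
Proof.
move=> hj; apply: ecc_le_reach => w.
have [[z ->]|[y yb ->]|[k hk ->]] := vtx_cases w.
- exists ((j - 1) + gdist e1 a z).
    by have := gdist_ecc e1 a z; lia.
  exact: reach_cat (proj2 (wA hj)) (rX2 (cd1 a z)).
- exists ((j - 1) + gdist e2 b y).
    by have := gdist_ecc e2 b y; lia.
  apply: reach_cat (proj2 (wA hj)) _.
  by rewrite -psib -(psiy yb); apply: rpsi; apply: cd2.
- case/andP: hj => j1 jl; case/andP: hk => k1 kl.
  case: (leqP k j) => kj.
    by exists (j - k); [lia | exact: proj2 (pw2 k1 kj jl)].
  by exists (k - j); [lia | exact: proj1 (pw2 j1 (ltnW kj) kl)].
Qed.

Lemma degX x : x != a -> deg g2 (X x) = deg g1 (X x).
Proof.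
move=> xa; rewrite /deg; apply: eq_card => w; rewrite !inE.
by case: w => [[z|y]|i]; rewrite /G2 /= ?(negbTE xa) ?andbT ?orbF.
Qed.

Definition sw (w : VV) : VV := if w == X a then Y b else if w == Y b then X a else w.
Lemma sw_inj : injective sw.
Proof.
apply: (can_inj (g := sw)) => w; rewrite /sw.
case: (eqVneq w (X a)) => [->|h1]; first by rewrite eqxx /=.
case: (eqVneq w (Y b)) => [->|h2]; first by rewrite eqxx.
by rewrite (negbTE h1) (negbTE h2).
Qed.

Lemma eqXX u v : (X u == X v) = (u == v). Proof. by []. Qed.
Lemma eqYY u v : (Y u == Y v) = (u == v). Proof. by []. Qed.
Lemma eqXY u v : (X u == Y v) = false. Proof. by []. Qed.
Lemma eqYX u v : (Y u == X v) = false. Proof. by []. Qed.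
Lemma eqIX i v : ((inr i : VV) == X v) = false. Proof. by []. Qed.
Lemma eqIY i v : ((inr i : VV) == Y v) = false. Proof. by []. Qed.

Lemma degY y : y != b -> deg g2 (Y y) = deg g1 (Y y).
Proof.
move=> yb; rewrite /deg -(card_preimset _ sw_inj); apply: eq_card => w; rewrite !inE.
case: w => [[z|z]|i]; rewrite /sw; [rewrite -/(X z) | rewrite -/(Y z) |];
  rewrite ?eqXX ?eqYY ?eqXY ?eqYX ?eqIX ?eqIY.
- case: (eqVneq z a) => [->|za].
    by rewrite /G2 /G1 /path_edge /= (negbTE yb) eqxx sym2 /= !orbF andbN.
  by rewrite /G2 /= (negbTE za) ?andbT ?orbF.
- case: (eqVneq z b) => [->|zb].
    by rewrite /G2 /G1 /path_edge /= (negbTE yb) eqxx sym2 /= !orbF.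
  by rewrite /G2 /= (negbTE zb) (negbTE yb) ?andbT ?orbF.
- by rewrite /G2 /= ?andbT ?orbF.
Qed.

Lemma degI2 i : deg g2 (inr i) = deg g1 (inr i).
Proof. by rewrite /deg; apply: eq_card => w; rewrite !inE /G2 /= andbT orbF. Qed.

Lemma eqSome (j k : nat) : (Some j == Some k) = (j == k). Proof. by []. Qed.

Lemma degI1 i : deg g1 (inr i) = 2.
Proof.
have hi := ltn_ord i.
rewrite /deg.
have -> : [set w | g1 (inr i) w] = [set pv i.+1; pv i.+3].
  apply/setP => w; rewrite !inE !eq_pv; try lia.
  rewrite /G1 /path_edge /=.
  case: (pp w) => [j|] //=.
  by rewrite !eqSome eqSS orbC eq_sym [j == _]eq_sym.
rewrite cards2; case: eqP => // h.
have := congr1 pp h; rewrite !pv_ppos; [move=> [] ?; lia | lia | lia].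
Qed.

Definition Kset : {set VV} := [set w : VV | match w with inl (inr y) => e2 b y | _ => false end].

Lemma cardU_disj (T : finType) (P Q : {set T}) : P :&: Q = set0 -> #|P :|: Q| = #|P| + #|Q|.
Proof. by move=> h; have := cardsUI P Q; rewrite h cards0 addn0. Qed.

Lemma degA : deg g2 (X a) = deg g1 (X a) + #|Kset|.
Proof.
rewrite /deg -cardU_disj.
  apply: eq_card => w; rewrite !inE.
  by case: w => [[z|y]|i]; rewrite /G2 /= ?eqxx ?andbT ?orbF.
apply/setP => w; rewrite !inE.
case: w => [[z|y]|i] /=; rewrite ?andbF //.
case: (eqVneq y b) => [->|yb]; first by rewrite irr2 andbF.
by rewrite /G1 /path_edge /X /= eqxx (negbTE yb).
Qed.

Lemma degB : deg g1 (Y b) = deg g2 (Y b) + #|Kset|.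
Proof.
rewrite /deg -cardU_disj.
  apply: eq_card => w; rewrite !inE.
  case: w => [[z|y]|i]; rewrite /G2 /= ?irr2 ?andbF ?andbT ?orbF //.
  rewrite eqxx /=; case E: (e2 b y); rewrite /G1 /H_edge /Y /= ?E ?orbT ?andbT ?orbF //.
apply/setP => w; rewrite !inE.
case: w => [[z|y]|i] /=; rewrite ?andbF //.
rewrite /G2 /Y /= eqxx /=.
by case E: (e2 b y); rewrite ?andbF ?orbF ?andbT.
Qed.

Lemma g2B_pe w : g2 (Y b) w -> path_edge a b (Y b) w.
Proof.
case: w => [[z|y]|i]; rewrite /G2 /G1 /= ?irr2 ?andbF ?orbF ?andbT //.
rewrite eqxx /=; case: (e2 b y); by rewrite ?andbF ?andbT.
Qed.

Lemma degB2 : deg g2 (Y b) <= 1.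
Proof.
rewrite /deg -[X in _ <= X](cards1 (pv l.-1)); apply: subset_leq_card.
apply/subsetP => w; rewrite !inE => /g2B_pe.
rewrite /path_edge /= eqxx.
case hw: (pp w) => [j|] // /orP [] /eqP hj.
  by have := ppos_le hw; lia.
rewrite eq_pv; last lia.
by rewrite hw eqSome; apply/eqP; lia.
Qed.

Lemma nb1 : exists z, e1 a z.
Proof.
have [x [y [_ _ xy]]] := card_gt1P c1.
have [z za] : exists2 z, z != a & true.
  case: (eqVneq x a) => [xa|xa]; last by exists x.
  by exists y => //; rewrite -xa eq_sym.
case/connectP: (con1 a z) => [[|z1 p]] /=; first by move=> _ h; rewrite h eqxx in za.
by case/andP => h _ _; exists z1.
Qed.

Lemma nb2 : exists z, e2 b z.
Proof.
have [x [y [_ _ xy]]] := card_gt1P c2.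
have [z za] : exists2 z, z != b & true.
  case: (eqVneq x b) => [xa|xa]; last by exists x.
  by exists y => //; rewrite -xa eq_sym.
case/connectP: (con2 b z) => [[|z1 p]] /=; first by move=> _ h; rewrite h eqxx in za.
by case/andP => h _ _; exists z1.
Qed.

Lemma Kpos : 0 < #|Kset|.
Proof. by have [z hz] := nb2; apply/card_gt0P; exists (Y z); rewrite inE. Qed.

Lemma degA1 : 2 <= deg g1 (X a).
Proof.
have [z hz] := nb1.
have za : z != a by apply/eqP => h; rewrite h irr1 in hz.
have e2' : #|[set X z; pv 2]| = 2.
  rewrite cards2; case: eqP => // h.
  by have := congr1 pp h; rewrite pv_ppos /X /= ?(negbTE za) //; lia.
apply: (@leq_trans #|[set X z; pv 2]|); first by rewrite e2'.
rewrite /deg; apply: subset_leq_card; apply/subsetP => w; rewrite !inE.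
case/orP => /eqP ->; first by rewrite /G1 /= hz.
by rewrite -pv1 /G1 /path_edge !pv_ppos //=; lia.
Qed.

Lemma eApos : 0 < eA.
Proof. have [z hz] := nb1. apply: (@ecc_pos _ e1 a z); by apply/eqP => h; rewrite h irr1 in hz. Qed.
Lemma eBpos : 0 < eB.
Proof. have [z hz] := nb2. apply: (@ecc_pos _ e2 b z); by apply/eqP => h; rewrite h irr2 in hz. Qed.

Lemma E2pos v : 0 < E2 v.
Proof.
case: (eqVneq v (X a)) => [->|h]; last exact: (@ecc_pos _ g2 v (X a) h).
by apply: (@ecc_pos _ g2 (X a) (Y b)).
Qed.


Definition rfl (v : VV) : VV := match v with inr i => inr (rev_ord i) | _ => v end.
Lemma rfl_inj : injective rfl.
Proof.
apply: (can_inj (g := rfl)) => v; case: v => [[z|y]|i] //=.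
by rewrite rev_ordK.
Qed.

Lemma per_id v : v != X a -> v != Y b -> eB <= eA ->
  ((deg g1 v)%:R / (E1 v)%:R <= (deg g2 v)%:R / (E2 v)%:R :> rat)%R.
Proof.
move=> va vb hab; case: v va vb => [[z|y]|i] va vb.
- have za : z != a by apply: contra va => /eqP ->.
  by rewrite (degX za); apply: frac_le; [apply: E2pos | apply: ubX].
- have yb : y != b by apply: contra vb => /eqP ->.
  by rewrite (degY yb); apply: frac_le; [apply: E2pos | apply: ubY].
- rewrite degI2; apply: frac_le; first exact: E2pos.
  have hi := ltn_ord i; rewrite inr_pv.
  have hj : 1 <= i.+2 <= l by lia.
  have := ubP hj; have := lbP hj; lia.
Qed.

Lemma per_rfl v : v != X a -> v != Y b -> eA < eB ->
  ((deg g1 (rfl v))%:R / (E1 (rfl v))%:R <= (deg g2 v)%:R / (E2 v)%:R :> rat)%R.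
Proof.
move=> va vb hab; case: v va vb => [[z|y]|i] va vb /=.
- have za : z != a by apply: contra va => /eqP ->.
  by rewrite (degX za); apply: frac_le; [apply: E2pos | apply: ubX].
- have yb : y != b by apply: contra vb => /eqP ->.
  by rewrite (degY yb); apply: frac_le; [apply: E2pos | apply: ubY].
- have -> : deg g1 (inr (rev_ord i)) = deg g2 (inr i) by rewrite degI2 !degI1.
  apply: frac_le; first exact: E2pos.
  have hi := ltn_ord i; rewrite !inr_pv /=.
  have hj : 1 <= i.+2 <= l by lia.
  have hj' : 1 <= (l - 2 - i.+1).+2 <= l by lia.
  have := ubP hj; have := lbP hj'; lia.
Qed.

Lemma main_ineq : (xi_ee g1 < xi_ee g2)%R.
Proof.
have eA0 := eApos; have eB0 := eBpos; have k0 := Kpos.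
have h1 : 1 <= 1 <= l by lia.
have hl' : 1 <= l <= l by lia.
have [lA1 lA2] := lbP h1; have [lB1 lB2] := lbP hl'.
have uA := ubP h1; have uB := ubP hl'.
rewrite pv1 in lA1 lA2 uA; rewrite pvl in lB1 lB2 uB.
have pA := E2pos (X a); have pB := E2pos (Y b).
have dB := degB2; have dA := degA1.
rewrite /xi_ee; case: (leqP eB eA) => hab.
- apply: (@sum_cmp _ (fun v => ((deg g1 v)%:R / (E1 v)%:R)%R) (fun v => ((deg g2 v)%:R / (E2 v)%:R)%R) id (X a) (Y b)) => //.
    by move=> v va vb; apply: per_id.
  rewrite /= degA degB; apply: endX => //; lia.
- apply: (@sum_cmp _ (fun v => ((deg g1 v)%:R / (E1 v)%:R)%R) (fun v => ((deg g2 v)%:R / (E2 v)%:R)%R) rfl (X a) (Y b)) => //.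
    exact: rfl_inj.
    by move=> v va vb; apply: per_rfl.
  rewrite /= degA degB; apply: endY => //; lia.
Qed.

End Main.

Theorem theorem3p3 (T1 T2 : finType) (e1 : rel T1) (e2 : rel T2)
    (a : T1) (b : T2) (l : nat) :
  simple_graph e1 -> connected_graph e1 -> 2 <= #|T1| ->
  simple_graph e2 -> connected_graph e2 -> 2 <= #|T2| ->
  2 <= l ->
  (xi_ee (G1 e1 e2 a b l) < xi_ee (G2 e1 e2 a b l))%R.
Proof.
move=> [s1 i1] cn1 c1 [s2 i2] cn2 c2 hl.
exact: main_ineq.
Qed.
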